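(* Let $(\mathfrak{Q},\&,e)$ be a non-trivial unital quantale. For $S\subseteq\mathfrak{Q}$ let $\mathfrak{Q}_S\text{-}\mathbf{FOrd}$ denote the full subcategory of $\mathfrak{Q}\text{-}\mathbf{FOrd}$ consisting of the $\mathfrak{Q}$-preordered $\mathfrak{Q}$-subsets $(X,|\cdot|,\alpha)$ with $|x|\in S$ for all $x\in X$. If $S\subseteq T\subseteq\mathfrak{Q}$, then $\mathfrak{Q}_S\text{-}\mathbf{FOrd}$ is a coreflective subcategory of $\mathfrak{Q}_T\text{-}\mathbf{FOrd}$, with the coreflector sending each $(X,|\cdot|,\alpha)\in\mathfrak{Q}_T\text{-}\mathbf{FOrd}$ to the set $X_S=\{x\in X\mid |x|\in S\}$ equipped with the restrictions of $|\cdot|$ and $\alpha$.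
   Context: A unital quantale $(\mathfrak{Q},\&,e)$ is a complete lattice with an associative join-preserving (in each variable) multiplication $\&$ with unit $e$; non-trivial means $\bot<e$. Implications: $p\& q\le r\iff p\le r/ q\iff q\le p\backslash r$. A $\mathfrak{Q}$-subset is a set $X$ with a map $|\cdot|\colon X\to\mathfrak{Q}$. A $\mathfrak{Q}$-preorder on it is a map $\alpha\colon X\times X\to\mathfrak{Q}$ with, for all $x,y,z$: $(\alpha(x,y)/|x|)\&|x|=\alpha(x,y)=|y|\&(|y|\backslash\alpha(x,y))$; $|x|\le\alpha(x,x)$; $(\alpha(y,z)/|y|)\&\alpha(x,y)=\alpha(y,z)\&(|y|\backslash\alpha(x,y))\le\alpha(x,z)$. $\mathfrak{Q}\text{-}\mathbf{FOrd}$ is the category whose objects are $\mathfrak{Q}$-preordered $\mathfrak{Q}$-subsets $(X,|\cdot|,\alpha)$ and whose morphisms $f\colon(X,\alpha)\to(Y,\beta)$ are $\mathfrak{Q}$-order-preserving maps: maps $f\colon X\to Y$ with $|fx|=|x|$ and $\alpha(x,x')\le\beta(fx,fx')$ for all $x,x'\in X$. A full subcategory is coreflective if the inclusion functor has a right adjoint (the coreflector). *)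

(* Defs.v *)
Record Quantale := {
  qcar :> Type;
  qle : qcar -> qcar -> Prop;
  qle_refl : forall x, qle x x;
  qle_trans : forall x y z, qle x y -> qle y z -> qle x z;
  qle_antisym : forall x y, qle x y -> qle y x -> x = y;
  qsup : (qcar -> Prop) -> qcar;
  qsup_ub : forall (A : qcar -> Prop) x, A x -> qle x (qsup A);
  qsup_least : forall (A : qcar -> Prop) y,
      (forall x, A x -> qle x y) -> qle (qsup A) y;
  qmul : qcar -> qcar -> qcar;
  qmulA : forall a b c, qmul a (qmul b c) = qmul (qmul a b) c;
  qe : qcar;
  qmul1l : forall a, qmul qe a = a;
  qmul1r : forall a, qmul a qe = a;
  qmul_supr : forall a (A : qcar -> Prop),
      qmul a (qsup A) = qsup (fun y => exists x, A x /\ y = qmul a x);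
  qmul_supl : forall a (A : qcar -> Prop),
      qmul (qsup A) a = qsup (fun y => exists x, A x /\ y = qmul x a)
}.

Section QDefs.
Variable Q : Quantale.

Definition qbot : Q := qsup Q (fun _ => False).

Definition nontrivial : Prop := qle Q qbot (qe Q) /\ qbot <> qe Q.

(** right implication  r / q  (p & q <= r  iff  p <= r / q) *)
Definition qrdiv (r q : Q) : Q := qsup Q (fun p => qle Q (qmul Q p q) r).
(** left implication  p \ r  (p & q <= r  iff  q <= p \ r) *)
Definition qldiv (p r : Q) : Q := qsup Q (fun q => qle Q (qmul Q p q) r).

(** A Q-subset together with a Q-valued binary map (candidate Q-preorder). *)
Record FObj := {
  fcar : Type;
  fnorm : fcar -> Q;
  falpha : fcar -> fcar -> Q
}.

Definition is_QPreorder (X : FObj) : Prop :=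
  let n := fnorm X in let a := falpha X in
  (forall x y,
      qmul Q (qrdiv (a x y) (n x)) (n x) = a x y /\
      a x y = qmul Q (n y) (qldiv (n y) (a x y))) /\
  (forall x, qle Q (n x) (a x x)) /\
  (forall x y z,
      qmul Q (qrdiv (a y z) (n y)) (a x y) = qmul Q (a y z) (qldiv (n y) (a x y)) /\
      qle Q (qmul Q (qrdiv (a y z) (n y)) (a x y)) (a x z)).

Definition is_QMorph (X Y : FObj) (f : fcar X -> fcar Y) : Prop :=
  (forall x, fnorm Y (f x) = fnorm X x) /\
  (forall x x', qle Q (falpha X x x') (falpha Y (f x) (f x'))).

Definition in_QS_FOrd (S : Q -> Prop) (X : FObj) : Prop :=
  is_QPreorder X /\ forall x, S (fnorm X x).

Definition restrict (X : FObj) (S : Q -> Prop) : FObj := {|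
  fcar := { x : fcar X | S (fnorm X x) };
  fnorm := fun x => fnorm X (proj1_sig x);
  falpha := fun x y => falpha X (proj1_sig x) (proj1_sig y)
|}.

Definition restrict_incl (X : FObj) (S : Q -> Prop) :
  fcar (restrict X S) -> fcar X := fun x => proj1_sig x.

Definition is_coreflection (Small : FObj -> Prop) (X C : FObj)
  (eps : fcar C -> fcar X) : Prop :=
  Small C /\ is_QMorph C X eps /\
  forall A : FObj, Small A -> forall g : fcar A -> fcar X, is_QMorph A X g ->
    exists h : fcar A -> fcar C,
      is_QMorph A C h /\ (forall a, eps (h a) = g a) /\
      forall h' : fcar A -> fcar C, is_QMorph A C h' ->
        (forall a, eps (h' a) = g a) -> forall a, h' a = h a.

End QDefs.

(* Main.v *)
Require Import Defs.
From Stdlib Require Import ProofIrrelevance.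

Theorem lemma3p8 (Q : Quantale) (HQ : nontrivial Q) (S T : Q -> Prop)
  (HST : forall q, S q -> T q) :
  forall X : FObj Q, in_QS_FOrd Q T X ->
    is_coreflection Q (in_QS_FOrd Q S) X (restrict Q X S) (restrict_incl Q X S).
Proof.
  intros X [[H1 [H2 H3]] HT].
  split; [|split].
  - split.
    + split; [|split]; simpl.
      * intros x y; apply H1.
      * intros x; apply H2.
      * intros x y z; apply H3.
    + intros [x Hx]; simpl; exact Hx.
  - split; simpl.
    + intros x; reflexivity.
    + intros x x'; apply qle_refl.
  - intros A [_ HA] g [Hg1 Hg2].
    assert (Hs : forall a, S (fnorm Q X (g a))).
    { intros a; rewrite Hg1; apply HA. }
    exists (fun a => exist _ (g a) (Hs a)).
    split; [split|split].
    + intros a; simpl; apply Hg1.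
    + intros a a'; simpl; apply Hg2.
    + intros a; reflexivity.
    + intros h' _ Hh' a.
      destruct (h' a) as [y Hy] eqn:E.
      unfold restrict_incl in Hh'. specialize (Hh' a). rewrite E in Hh'.
      simpl in Hh'. subst y. f_equal. apply proof_irrelevance.
Qed.
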